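(* In the setting below (either $P=\mathfrak S$ or $P=\mathfrak A$, absolute error criterion), if $\{S_d\}$ is polynomially tractable with constants $C,p>0$, $q\ge0$, then $\lambda\in\ell_\tau$ for all $\tau>p/2$, and for every such $\tau$ and all $d\in\mathbb N$, $$\frac1{\lambda_{d,\psi(1)}^\tau}\sum_{k\in\nabla_d}\lambda_{d,k}^\tau\le(1+C)d^q+C^{2\tau/p}\zeta\Big(\frac{2\tau}p\Big)\Big(\frac{d^{2q/p}}{\lambda_{d,\psi(1)}}\Big)^\tau.$$
   Context: Setting: $S_1:H_1\to G_1$ is a compact linear operator between real Hilbert spaces ($H_1$ infinite-dimensional separable); $\lambda=(\lambda_m)_{m\in\mathbb N}$, $\lambda_1\ge\lambda_2\ge\dots\ge0$, are the eigenvalues of $S_1^\dagger S_1$. $S_d=S_1^{\otimes d}:H_1^{\otimes d}\to G_1^{\otimes d}$. For each $d$ fix $\emptyset\ne I_d=\{i_1<\dots<i_{a_d}\}\subset\{1,\dots,d\}$ ($I_1=\{1\}$), put $a_d=\#I_d$, $b_d=d-a_d$, and fix one type $P\in\{\mathfrak S,\mathfrak A\}$ for all $d$; the problem $\{S_d\}$ is the family of restrictions of $S_d$ to the $I_d$-symmetric subspace (if $P=\mathfrak S$) or $I_d$-antisymmetric subspace (if $P=\mathfrak A$) of $H_1^{\otimes d}$, i.e. the range of $\frac1{a_d!}\sum_{\pi}(\pm1)U_\pi$, the sum over permutations $\pi$ of $\{1,\dots,d\}$ fixing all points outside $I_d$, $U_\pi(f_1\otimes\cdots\otimes f_d)=f_{\pi(1)}\otimes\cdots\otimes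 f_{\pi(d)}$, sign $(-1)^{|\pi|}$ used for $\mathfrak A$. Let $\nabla_d=\{k\in\mathbb N^d:k_{i_1}\le\dots\le k_{i_{a_d}}\}$ for $P=\mathfrak S$ and with strict inequalities for $P=\mathfrak A$; $\lambda_{d,k}=\prod_{l=1}^d\lambda_{k_l}$; $\psi:\mathbb N\to\nabla_d$ a bijection with $\lambda_{d,\psi(1)}\ge\lambda_{d,\psi(2)}\ge\cdots$. These are exactly the eigenvalues of $S_d^\dagger S_d$ on the subspace, and the information complexity (absolute error) is $n(\epsilon,d)=\#\{k\in\nabla_d:\lambda_{d,k}>\epsilon^2\}$, the initial error $\epsilon^{\rm init}_d=\sqrt{\lambda_{d,\psi(1)}}$ (equal to $\lambda_1^{d/2}$ if $P=\mathfrak S$, and $\sqrt{\lambda_1^{b_d}\lambda_1\lambda_2\cdots\lambda_{a_d}}$ if $P=\mathfrak A$). Polynomially tractable: $\exists C,p>0,q\ge0$ with $n(\epsilon,d)\le C\epsilon^{-p}d^q$ for all $d\in\mathbb N,\epsilon\in(0,1]$; strongly polynomially tractable: this with $q=0$. Standing assumptions: $\lambda_2>0$ and $\epsilon_d^{\rm init}>0$ for all $d$. $\ell_\tau$: sequences with $\|\lambda\|_{\ell_\tau}^\tau=\sum_m\lambda_m^\tau<\infty$. $\zeta$ is the Riemann zeta function. *)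

(* Defs.v *)
From Stdlib Require Import Reals List Lia Lra.
Open Scope R_scope.

(* Type of the subspace: I_d-symmetric or I_d-antisymmetric. *)
Inductive ptype := PSym | PAnti.

(* Real power x^t for x >= 0 (with 0^t = 0, used only for t > 0). *)
Definition rpow (x t : R) : R := if Rlt_dec 0 x then Rpower x t else 0.

(* lambda_{d,k} = prod_l lambda_{k_l}; a multi-index k in N^d is a list of
   length d (entry l-1 is k_l); lam m is lambda_m for m >= 1. *)
Definition lam_dk (lam : nat -> R) (k : list nat) : R :=
  fold_right (fun m acc => lam m * acc) 1 k.

(* I d i  :<->  i \in I_d  (positions are 1..d). *)
Definition index_sets_ok (I : nat -> nat -> Prop) : Prop :=
  forall d, (1 <= d)%nat ->
    (forall i, I d i -> (1 <= i <= d)%nat) /\ (exists i, I d i).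

Definition in_nabla (P : ptype) (I : nat -> nat -> Prop) (d : nat) (k : list nat) : Prop :=
  length k = d /\ (forall m, In m k -> (1 <= m)%nat) /\
  forall i j, (1 <= i)%nat -> (i < j)%nat -> (j <= d)%nat -> I d i -> I d j ->
    match P with
    | PSym => (nth (i - 1) k 0 <= nth (j - 1) k 0)%nat
    | PAnti => (nth (i - 1) k 0 < nth (j - 1) k 0)%nat
    end.

(* #A <= B for a (possibly infinite) set A of multi-indices. *)
Definition card_le (A : list nat -> Prop) (B : R) : Prop :=
  forall F : list (list nat), NoDup F -> (forall k, In k F -> A k) -> INR (length F) <= B.

Definition info_complexity_le (P : ptype) (I : nat -> nat -> Prop) (lam : nat -> R)
  (eps : R) (d : nat) (B : R) : Prop :=
  card_le (fun k => in_nabla P I d k /\ lam_dk lam k > eps ^ 2) B.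

Definition poly_tractable_with (P : ptype) (I : nat -> nat -> Prop) (lam : nat -> R)
  (C p q : R) : Prop :=
  0 < C /\ 0 < p /\ 0 <= q /\
  forall (d : nat) (eps : R), (1 <= d)%nat -> 0 < eps <= 1 ->
    info_complexity_le P I lam eps d (C * Rpower eps (- p) * Rpower (INR d) q).

Definition sumR (l : list R) : R := fold_right Rplus 0 l.

Definition in_ell (lam : nat -> R) (tau : R) : Prop :=
  exists l, infinite_sum (fun n => rpow (lam (S n)) tau) l.

Definition is_zeta (s z : R) : Prop :=
  infinite_sum (fun n => Rpower (INR (S n)) (- s)) z.

(* Main.v *)
Require Import Defs.
From Stdlib Require Import Reals List Lia Lra.
Open Scope R_scope.

Lemma exp_le_mono x y : x <= y -> exp x <= exp y.
Proof. intros [H|H]. left; now apply exp_increasing. subst; lra. Qed.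

Lemma ln_le_mono x y : 0 < x -> x <= y -> ln x <= ln y.
Proof. intros Hx [H|H]. left; now apply ln_increasing. subst; lra. Qed.

Lemma ln_le_x1 x : 0 < x -> ln x <= x - 1.
Proof. intros Hx. pose proof (exp_ineq1_le (ln x)). rewrite exp_ln in H; lra. Qed.

Definition gtb (e x : R) : bool := if Rlt_dec e x then true else false.

Lemma rpow_nonneg x t : 0 <= rpow x t.
Proof. unfold rpow. destruct Rlt_dec. unfold Rpower. left; apply exp_pos. lra. Qed.

Lemma rpow_pos x t : 0 < x -> rpow x t = exp (t * ln x).
Proof. intros. unfold rpow. destruct Rlt_dec; [reflexivity|lra]. Qed.

Lemma rpow_mono x y t : 0 < t -> x <= y -> rpow x t <= rpow y t.
Proof.
  intros Ht Hxy. unfold rpow. destruct (Rlt_dec 0 x); destruct (Rlt_dec 0 y).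
  - unfold Rpower. apply exp_le_mono. apply Rmult_le_compat_l; [lra|]. now apply ln_le_mono.
  - lra.
  - unfold Rpower. left; apply exp_pos.
  - lra.
Qed.

Lemma sumR_app l1 l2 : sumR (l1 ++ l2) = sumR l1 + sumR l2.
Proof. induction l1; simpl; [lra|rewrite IHl1; lra]. Qed.

Lemma sumR_split {A} (f : A -> bool) (g : A -> R) l :
  sumR (map g l) = sumR (map g (filter f l)) + sumR (map g (filter (fun x => negb (f x)) l)).
Proof. induction l; simpl; [lra|]. destruct (f a); simpl; rewrite IHl; lra. Qed.

Lemma sumR_bound {A} (g : A -> R) b l : (forall x, In x l -> g x <= b) ->
  sumR (map g l) <= INR (length l) * b.
Proof.
  induction l as [|a l IH]; intros H.
  - simpl; lra.
  - assert (g a <= b) by (apply H; simpl; auto).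
    assert (sumR (map g l) <= INR (length l) * b) by (apply IH; intros; apply H; simpl; auto).
    replace (sumR (map g (a :: l))) with (g a + sumR (map g l)) by reflexivity.
    replace (length (a :: l)) with (S (length l)) by reflexivity. rewrite S_INR. lra.
Qed.

Lemma length_filter_map {A B} (f : B -> bool) (g : A -> B) l :
  length (filter f (map g l)) = length (filter (fun x => f (g x)) l).
Proof. induction l; simpl; auto. destruct (f (g a)); simpl; auto. Qed.

Lemma length_filter_filter {A} (f h : A -> bool) l :
  (length (filter f (filter h l)) <= length (filter f l))%nat.
Proof. induction l; simpl; auto. destruct (h a); simpl; destruct (f a); simpl; lia. Qed.

Lemma filter_all {A} (f : A -> bool) l : (forall x, In x l -> f x = true) -> filter f l = l.
Proof. induction l; simpl; intros; auto. rewrite H by auto. f_equal; auto. Qed.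

Lemma min_exists (l : list R) : l <> nil -> exists m, In m l /\ forall x, In x l -> m <= x.
Proof.
  induction l as [|a l IH]; intros Hn; [congruence|].
  destruct l as [|b l'].
  - exists a; simpl; split; auto. intros x [H|[]]; subst; lra.
  - destruct IH as [m [Hm Hm']]; [congruence|].
    destruct (Rle_dec a m).
    + exists a; split; [now left|]. intros x [H|H]; [subst; lra|]. specialize (Hm' x H); lra.
    + exists m; split; [now right|]. intros x [H|H]; [subst; lra|]. auto.
Qed.

Lemma NoDup_map_inj {A B} (f : A -> B) l : (forall x y, f x = f y -> x = y) -> NoDup l -> NoDup (map f l).
Proof.
  intros Hi Hl; induction Hl; simpl; constructor; auto.
  intros Hin. apply in_map_iff in Hin as [y [Hy Hy']]. apply Hi in Hy; subst; auto.
Qed.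

Fixpoint psum (s : R) (N : nat) : R :=
  match N with O => 0 | S n => psum s n + Rpower (INR (S n)) (- s) end.

Lemma psum_nonneg s N : 0 <= psum s N.
Proof. induction N; cbn [psum]; [lra|]. unfold Rpower. pose proof (exp_pos (- s * ln (INR (S N)))). lra. Qed.

Lemma lim_arg (A p m N : R) : 0 < A -> 0 < p -> 0 < m <= 1 -> 1 <= N ->
  (forall e, 0 < e <= 1 -> e ^ 2 < m -> N <= A * Rpower e (- p)) ->
  ln N <= ln A - (p / 2) * ln m.
Proof.
  intros HA Hp Hm HN H.
  destruct (Rle_dec (ln N) (ln A - (p / 2) * ln m)) as [|Hc]; [assumption|].
  apply Rnot_le_lt in Hc. exfalso.
  set (dl := ln N - (ln A - p / 2 * ln m)).
  assert (Hd : 0 < dl) by (unfold dl; lra).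
  assert (Hlm : ln m <= 0) by (rewrite <- ln_1; apply ln_le_mono; lra).
  set (e := exp (ln m / 2 - dl / (2 * p))).
  assert (He0 : 0 < e) by apply exp_pos.
  assert (He1 : e <= 1).
  { unfold e. rewrite <- exp_0. apply exp_le_mono.
    assert (0 < dl / (2 * p)) by (apply Rdiv_lt_0_compat; lra). lra. }
  assert (He2 : e ^ 2 < m).
  { unfold e. rewrite <- (exp_ln m) at 2 by lra. simpl. rewrite Rmult_1_r, <- exp_plus.
    apply exp_increasing. assert (0 < dl / (2 * p)) by (apply Rdiv_lt_0_compat; lra). lra. }
  specialize (H e (conj He0 He1) He2).
  unfold Rpower in H. unfold e in H. rewrite ln_exp in H.
  apply ln_le_mono in H; [|lra]. rewrite ln_mult in H by (try apply exp_pos; lra).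
  rewrite ln_exp in H.
  replace (- p * (ln m / 2 - dl / (2 * p))) with (- (p/2) * ln m + dl / 2) in H by (field; lra).
  unfold dl in H. lra.
Qed.

Lemma key (A p t : R) (xs : list R) : 0 < A -> 0 < p -> 0 < t ->
  (forall x, In x xs -> 0 <= x <= 1) ->
  (forall e, 0 < e <= 1 -> INR (length (filter (gtb (e ^ 2)) xs)) <= A * Rpower e (- p)) ->
  sumR (map (fun x => rpow x t) xs) <= Rpower A (2 * t / p) * psum (2 * t / p) (length xs).
Proof.
  intros HA Hp Ht. remember (length xs) as n eqn:Hn. revert xs Hn.
  induction n as [|n IH]; intros xs Hn H01 Hcnt.
  - destruct xs; [simpl; lra|discriminate].
  - destruct (min_exists xs) as [m [Hm Hmin]]; [intro; subst; discriminate|].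
    destruct (in_split m xs Hm) as [l1 [l2 Hxs]]. subst xs.
    rewrite map_app, sumR_app. simpl.
    assert (Hrest : sumR (map (fun x => rpow x t) (l1 ++ l2)) <=
                    Rpower A (2 * t / p) * psum (2 * t / p) n).
    { apply IH.
      - rewrite length_app in Hn |- *. simpl in Hn. lia.
      - intros x Hx. apply H01. apply in_app_or in Hx. apply in_or_app. simpl. tauto.
      - intros e He. eapply Rle_trans; [|apply (Hcnt e He)]. apply le_INR.
        rewrite !filter_app, !length_app. cbn [filter]. destruct (gtb (e^2) m); cbn [length]; lia. }
    rewrite map_app, sumR_app in Hrest. simpl in Hrest.
    assert (Hterm : rpow m t <= Rpower A (2 * t / p) * Rpower (INR (S n)) (- (2 * t / p))).
    { assert (Hm01 : 0 <= m <= 1) by (apply H01; apply in_or_app; simpl; auto).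
      destruct (Rle_lt_or_eq_dec 0 m (proj1 Hm01)) as [Hmp|Hm0].
      2:{ subst m. unfold rpow. destruct Rlt_dec; [lra|].
          unfold Rpower. left. apply Rmult_lt_0_compat; apply exp_pos. }
      assert (HNpos : 1 <= INR (S n)) by (rewrite S_INR; pose proof (pos_INR n); lra).
      assert (HL := lim_arg A p m (INR (S n)) HA Hp (conj Hmp (proj2 Hm01)) HNpos).
      assert (HL' : ln (INR (S n)) <= ln A - p / 2 * ln m).
      { apply HL. intros e He He2. rewrite Hn. eapply Rle_trans; [|apply (Hcnt e He)].
        right. f_equal. rewrite filter_all; auto.
        intros x Hx. unfold gtb. destruct Rlt_dec; auto. exfalso. apply n0.
        specialize (Hmin x Hx). lra. }
      rewrite rpow_pos by lra. unfold Rpower. rewrite <- exp_plus. apply exp_le_mono.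
      assert (ln m <= (2 / p) * (ln A - ln (INR (S n)))).
      { apply (Rmult_le_reg_l (p / 2)); [lra|].
        replace (p / 2 * (2 / p * (ln A - ln (INR (S n))))) with (ln A - ln (INR (S n))) by (field; lra).
        lra. }
      replace (2 * t / p * ln A + - (2 * t / p) * ln (INR (S n))) with
        (t * ((2 / p) * (ln A - ln (INR (S n))))) by (field; lra).
      apply Rmult_le_compat_l; lra. }
    replace (match n with 0%nat => 1 | S _ => INR n + 1 end) with (INR (S n)) by reflexivity. lra.
Qed.

Lemma zeta_step (a N : R) : 0 < a -> 1 <= N ->
  a * Rpower (N + 1) (- (a + 1)) <= Rpower N (- a) - Rpower (N + 1) (- a).
Proof.
  intros Ha HN. unfold Rpower.
  set (x := ln (N + 1)). set (y := ln N).
  assert (Hxy : 1 / (N + 1) <= x - y).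
  { unfold x, y. assert (H0 : 0 < N / (N+1)) by (apply Rdiv_lt_0_compat; lra).
    pose proof (ln_le_x1 _ H0) as H.
    unfold Rdiv in H. rewrite ln_mult, ln_Rinv in H by (try apply Rinv_0_lt_compat; lra).
    assert (N * / (N + 1) - 1 = - (1 / (N+1))) by (field; lra). lra. }
  assert (E1 : exp (- a * y) = exp (- a * x) * exp (a * (x - y))).
  { rewrite <- exp_plus. f_equal. ring. }
  assert (E2 : exp (- (a + 1) * x) = exp (- a * x) * / (N + 1)).
  { replace (- (a + 1) * x) with (- a * x + - x) by ring. rewrite exp_plus. f_equal.
    unfold x. rewrite <- ln_Rinv by lra. apply exp_ln. apply Rinv_0_lt_compat; lra. }
  rewrite E1, E2. pose proof (exp_ineq1_le (a * (x - y))).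
  pose proof (exp_pos (- a * x)).
  assert (a * / (N + 1) <= a * (x - y)) by (apply Rmult_le_compat_l; [lra|]; unfold Rdiv in Hxy; lra).
  assert (exp (- a * x) * (a * / (N + 1)) <= exp (- a * x) * (exp (a * (x - y)) - 1)).
  { apply Rmult_le_compat_l; lra. }
  nra.
Qed.

Lemma Rpower_base1 y : Rpower 1 y = 1.
Proof. unfold Rpower. rewrite ln_1, Rmult_0_r. apply exp_0. Qed.

Lemma psum_bound (s : R) (N : nat) : 1 < s -> psum s N <= 1 + 1 / (s - 1).
Proof.
  intros Hs.
  assert (Hgen : forall M, (1 <= M)%nat ->
            psum s M <= 1 + (1 - Rpower (INR M) (- (s - 1))) / (s - 1)).
  { intros M HM. induction M as [|M IH]; [lia|].
    destruct M as [|M].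
    - cbn [psum]. replace (INR 1) with 1 by reflexivity. rewrite !Rpower_base1.
      replace ((1 - 1) / (s - 1)) with 0 by (field; lra). lra.
    - change (psum s (S (S M))) with (psum s (S M) + Rpower (INR (S (S M))) (-s)). specialize (IH ltac:(lia)).
      pose proof (zeta_step (s - 1) (INR (S M)) ltac:(lra)) as Z.
      assert (1 <= INR (S M)) by (rewrite S_INR; pose proof (pos_INR M); lra).
      specialize (Z H).
      replace (INR (S (S M))) with (INR (S M) + 1) by (rewrite (S_INR (S M)); reflexivity).
      replace (- (s - 1 + 1)) with (- s) in Z by ring.
      assert (Hd : (1 - Rpower (INR (S M) + 1) (- (s - 1))) / (s - 1) =
                   (1 - Rpower (INR (S M)) (- (s - 1))) / (s - 1) +
                   (Rpower (INR (S M)) (- (s - 1)) - Rpower (INR (S M) + 1) (- (s - 1))) / (s - 1))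
        by (field; lra).
      rewrite Hd.
      assert ((s - 1) * Rpower (INR (S M) + 1) (- s) / (s - 1) <=
              (Rpower (INR (S M)) (- (s - 1)) - Rpower (INR (S M) + 1) (- (s - 1))) / (s - 1)).
      { unfold Rdiv. apply Rmult_le_compat_r; [left; apply Rinv_0_lt_compat; lra|exact Z]. }
      replace ((s - 1) * Rpower (INR (S M) + 1) (- s) / (s - 1)) with (Rpower (INR (S M) + 1) (- s)) in H0 by (field; lra).
      lra. }
  destruct N as [|N]; [cbn [psum]; assert (0 < 1/(s-1)) by (apply Rdiv_lt_0_compat; lra); lra|].
  eapply Rle_trans; [apply Hgen; lia|].
  assert (0 <= Rpower (INR (S N)) (- (s - 1)) / (s - 1)).
  { unfold Rpower. left; apply Rdiv_lt_0_compat; [apply exp_pos|lra]. }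
  unfold Rdiv in *. lra.
Qed.

Lemma psum_sum s N : psum s (S N) = sum_f_R0 (fun n => Rpower (INR (S n)) (- s)) N.
Proof.
  induction N.
  - cbn [psum sum_f_R0]. lra.
  - cbn [sum_f_R0]. rewrite <- IHN. reflexivity.
Qed.

Lemma psum_le_zeta s z N : is_zeta s z -> psum s N <= z.
Proof.
  intros Hz.
  assert (Hg : Un_growing (sum_f_R0 (fun n => Rpower (INR (S n)) (- s)))).
  { intros n. cbn [sum_f_R0]. unfold Rpower. pose proof (exp_pos (- s * ln (INR (S (S n))))). lra. }
  pose proof (growing_ineq _ z Hg Hz) as G.
  destruct N as [|N].
  - cbn [psum]. specialize (G 0%nat). simpl in G. unfold Rpower in G.
    pose proof (exp_pos (- s * ln 1)). lra.
  - rewrite psum_sum. apply G.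
Qed.

Lemma lam_dk_nonneg lam k : (forall m, (1 <= m)%nat -> 0 <= lam m) ->
  (forall m, In m k -> (1 <= m)%nat) -> 0 <= lam_dk lam k.
Proof.
  intros Hn. induction k; simpl; intros H; [lra|].
  apply Rmult_le_pos; auto.
Qed.

Lemma sum_f_sumR f M : sum_f_R0 f M = sumR (map f (seq 0 (S M))).
Proof.
  induction M; [simpl; lra|].
  rewrite seq_S, map_app, sumR_app. cbn [sum_f_R0]. rewrite IHM. simpl. lra.
Qed.

Lemma nabla1 P I m : (1 <= m)%nat -> in_nabla P I 1 (m :: nil).
Proof.
  intros Hm. split; [reflexivity|]. split.
  - intros x [H|[]]; subst; auto.
  - intros i j Hi Hij Hj. lia.
Qed.

Lemma Rpower_pos x y : 0 < Rpower x y.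
Proof. apply exp_pos. Qed.

Lemma part1 (P : ptype) (I : nat -> nat -> Prop) (lam : nat -> R) (C p q : R)
  (Hnonneg : forall m, (1 <= m)%nat -> 0 <= lam m)
  (Hdecr : forall m, (1 <= m)%nat -> lam (S m) <= lam m)
  (Htract : poly_tractable_with P I lam C p q) :
  forall tau, p / 2 < tau -> in_ell lam tau.
Proof.
  intros tau Htau. destruct Htract as [HC [Hp [Hq Ht]]].
  assert (Htau0 : 0 < tau) by lra.
  assert (Hs : 1 < 2 * tau / p).
  { apply (Rmult_lt_reg_r p); [lra|]. unfold Rdiv. rewrite Rmult_assoc, Rinv_l by lra. lra. }
  assert (Hcnt : forall e L, 0 < e <= 1 ->
    INR (length (filter (gtb (e ^ 2)) (map (fun n => lam (S n)) (seq 0 L)))) <= C * Rpower e (- p)).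
  { intros e L He. specialize (Ht 1%nat e (le_n 1) He).
    replace (Rpower (INR 1) q) with 1 in Ht by (symmetry; apply Rpower_base1).
    rewrite Rmult_1_r in Ht.
    rewrite length_filter_map.
    set (G := filter (fun n => gtb (e ^ 2) (lam (S n))) (seq 0 L)).
    specialize (Ht (map (fun n => (S n :: nil)) G)). rewrite length_map in Ht. apply Ht.
    - apply NoDup_map_inj; [intros x y Hxy; injection Hxy; auto|].
      apply NoDup_filter, seq_NoDup.
    - intros k Hk. apply in_map_iff in Hk as [n [Hn HnG]]. subst k.
      unfold G in HnG. apply filter_In in HnG as [_ Hg].
      split; [apply nabla1; lia|]. simpl. rewrite Rmult_1_r.
      unfold gtb in Hg. destruct Rlt_dec; [lra|discriminate]. }
  assert (Hdec1 : forall n, lam (S n) <= lam 1%nat).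
  { induction n; [lra|]. specialize (Hdecr (S n) ltac:(lia)). lra. }
  set (u := sum_f_R0 (fun n => rpow (lam (S n)) tau)).
  assert (Hg : Un_growing u).
  { intros n. unfold u. cbn [sum_f_R0]. pose proof (rpow_nonneg (lam (S (S n))) tau). lra. }
  assert (Hub : has_ub u).
  { exists (C * rpow (lam 1%nat) tau + Rpower C (2 * tau / p) * (1 + 1 / (2 * tau / p - 1))).
    unfold is_upper_bound, EUn. intros x [M HM]. subst x. unfold u. rewrite sum_f_sumR.
    rewrite <- (map_map (fun n => lam (S n)) (fun x => rpow x tau)).
    set (xs := map (fun n => lam (S n)) (seq 0 (S M))).
    rewrite (sumR_split (gtb 1)).
    apply Rplus_le_compat.
    - eapply Rle_trans; [apply (sumR_bound _ (rpow (lam 1%nat) tau))|].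
      + intros x Hx. apply filter_In in Hx as [Hx _]. unfold xs in Hx.
        apply in_map_iff in Hx as [n [<- _]]. apply rpow_mono; auto.
      + apply Rmult_le_compat_r; [apply rpow_nonneg|].
        specialize (Hcnt 1 (S M) ltac:(lra)). rewrite pow1, Rpower_base1, Rmult_1_r in Hcnt.
        exact Hcnt.
    - eapply Rle_trans; [apply (key C p tau); auto|].
      + intros x Hx. apply filter_In in Hx as [Hx Hb]. unfold xs in Hx.
        apply in_map_iff in Hx as [n [<- _]]. split; [apply Hnonneg; lia|].
        unfold gtb in Hb. destruct Rlt_dec; simpl in Hb; [discriminate|lra].
      + intros e He. eapply Rle_trans; [apply le_INR, length_filter_filter|]. apply Hcnt; auto.
      + apply Rmult_le_compat_l; [left; apply Rpower_pos|]. apply psum_bound; auto. }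
  destruct (growing_cv u Hg Hub) as [l Hl]. exists l. exact Hl.
Qed.

Lemma part2 (P : ptype) (I : nat -> nat -> Prop) (lam : nat -> R) (C p q : R)
  (Hnonneg : forall m, (1 <= m)%nat -> 0 <= lam m)
  (Hinit : forall d, (1 <= d)%nat -> exists k, in_nabla P I d k /\ 0 < lam_dk lam k)
  (Htract : poly_tractable_with P I lam C p q) :
  (forall tau, p / 2 < tau ->
   forall (d : nat), (1 <= d)%nat ->
   forall kmax, in_nabla P I d kmax ->
     (forall k, in_nabla P I d k -> lam_dk lam k <= lam_dk lam kmax) ->
   forall z, is_zeta (2 * tau / p) z ->
   forall F : list (list nat), NoDup F -> (forall k, In k F -> in_nabla P I d k) ->
     / rpow (lam_dk lam kmax) tau * sumR (map (fun k => rpow (lam_dk lam k) tau) F)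
     <= (1 + C) * Rpower (INR d) q
        + Rpower C (2 * tau / p) * z
          * rpow (Rpower (INR d) (2 * q / p) / lam_dk lam kmax) tau).
Proof.
  intros tau Htau d Hd kmax Hkmax Hmax z Hz F HF HFn.
  destruct Htract as [HC [Hp [Hq Ht]]].
  assert (Htau0 : 0 < tau) by lra.
  set (s := 2 * tau / p).
  set (g := lam_dk lam).
  set (lm := g kmax).
  assert (Hlm : 0 < lm).
  { destruct (Hinit d Hd) as [k0 [Hk0 Hk0p]]. specialize (Hmax k0 Hk0). unfold lm, g. lra. }
  assert (Hdpos : 0 < INR d) by (apply lt_0_INR; lia).
  set (Dq := Rpower (INR d) q).
  assert (HDq : 0 < Dq) by apply Rpower_pos.
  set (A := C * Dq).
  assert (HA : 0 < A) by (unfold A; apply Rmult_lt_0_compat; lra).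
  assert (Hcnt : forall e, 0 < e <= 1 ->
    INR (length (filter (fun k => gtb (e ^ 2) (g k)) F)) <= A * Rpower e (- p)).
  { intros e He. specialize (Ht d e Hd He).
    replace (A * Rpower e (- p)) with (C * Rpower e (- p) * Rpower (INR d) q) by (unfold A, Dq; ring).
    apply Ht.
    - apply NoDup_filter; auto.
    - intros k Hk. apply filter_In in Hk as [Hk Hg]. split; auto.
      unfold gtb in Hg. destruct Rlt_dec; [unfold g in r; lra|discriminate]. }
  set (L := rpow lm tau).
  assert (HL : 0 < L) by (unfold L; rewrite rpow_pos by lra; apply exp_pos).
  assert (Hz0 : 0 <= z) by (apply (Rle_trans _ (psum s 0)); [simpl; lra|apply psum_le_zeta; auto]).
  rewrite (sumR_split (fun k => gtb 1 (g k))).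
  assert (Hbig : sumR (map (fun k => rpow (g k) tau) (filter (fun k => gtb 1 (g k)) F)) <= A * L).
  { eapply Rle_trans; [apply (sumR_bound _ L)|].
    - intros k Hk. apply filter_In in Hk as [Hk _]. unfold L. apply rpow_mono; auto.
    - apply Rmult_le_compat_r; [lra|].
      specialize (Hcnt 1 ltac:(lra)). rewrite pow1, Rpower_base1, Rmult_1_r in Hcnt. exact Hcnt. }
  assert (Hsmall : sumR (map (fun k => rpow (g k) tau) (filter (fun k => negb (gtb 1 (g k))) F))
                   <= Rpower A s * z).
  { rewrite <- (map_map g (fun x => rpow x tau)).
    eapply Rle_trans; [apply (key A p tau); auto|].
    - intros x Hx. apply in_map_iff in Hx as [k [<- Hk]]. apply filter_In in Hk as [Hk Hb].
      split.
      + apply lam_dk_nonneg; auto. apply HFn; auto.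
      + unfold gtb in Hb. destruct Rlt_dec; simpl in Hb; [discriminate|lra].
    - intros e He. rewrite length_filter_map.
      eapply Rle_trans; [apply le_INR, length_filter_filter|]. apply Hcnt; auto.
    - apply Rmult_le_compat_l; [left; apply Rpower_pos|]. apply psum_le_zeta; auto. }
  assert (HAs : Rpower A s = Rpower C s * Rpower (INR d) (q * s)).
  { unfold A, Dq. rewrite <- Rpower_mult_distr by (try apply Rpower_pos; lra).
    rewrite Rpower_mult. reflexivity. }
  assert (Hr : rpow (Rpower (INR d) (2 * q / p) / lm) tau = Rpower (INR d) (q * s) * / L).
  { assert (0 < Rpower (INR d) (2 * q / p) / lm) by (apply Rdiv_lt_0_compat; [apply Rpower_pos|lra]).
    unfold L. rewrite !rpow_pos by lra. unfold Rdiv. rewrite ln_mult, ln_Rinv, ln_Rpower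
      by (try apply Rpower_pos; try apply Rinv_0_lt_compat; lra).
    unfold Rpower. rewrite <- exp_Ropp, <- exp_plus. f_equal. unfold s. field. lra. }
  rewrite Hr.
  replace (Rpower C (2 * tau / p)) with (Rpower C s) by reflexivity.
  rewrite HAs in Hsmall.
  assert (Hiv : 0 < / L) by (apply Rinv_0_lt_compat; lra).
  assert (E : / L * (A * L) = A) by (field; lra).
  assert (/ L * (sumR (map (fun k => rpow (g k) tau) (filter (fun k => gtb 1 (g k)) F)) +
     sumR (map (fun k => rpow (g k) tau) (filter (fun k => negb (gtb 1 (g k))) F))) <=
     / L * (A * L + Rpower C s * Rpower (INR d) (q * s) * z)).
  { apply Rmult_le_compat_l; lra. }
  assert (E2 : / L * (A * L + Rpower C s * Rpower (INR d) (q * s) * z) =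
     A + Rpower C s * z * (Rpower (INR d) (q * s) * / L)) by (field; lra).
  rewrite E2 in H.
  assert (A <= (1 + C) * Dq) by (unfold A; lra).
  lra.
Qed.

Theorem lemma3 (P : ptype) (I : nat -> nat -> Prop) (lam : nat -> R) (C p q : R)
  (HI : index_sets_ok I)
  (Hnonneg : forall m, (1 <= m)%nat -> 0 <= lam m)
  (Hdecr : forall m, (1 <= m)%nat -> lam (S m) <= lam m)
  (Hcompact : Un_cv lam 0)
  (Hlam2 : 0 < lam 2%nat)
  (Hinit : forall d, (1 <= d)%nat -> exists k, in_nabla P I d k /\ 0 < lam_dk lam k)
  (Htract : poly_tractable_with P I lam C p q) :
  (forall tau, p / 2 < tau -> in_ell lam tau) /\
  (forall tau, p / 2 < tau ->
   forall (d : nat), (1 <= d)%nat ->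
   forall kmax, in_nabla P I d kmax ->
     (forall k, in_nabla P I d k -> lam_dk lam k <= lam_dk lam kmax) ->
   forall z, is_zeta (2 * tau / p) z ->
   forall F : list (list nat), NoDup F -> (forall k, In k F -> in_nabla P I d k) ->
     / rpow (lam_dk lam kmax) tau * sumR (map (fun k => rpow (lam_dk lam k) tau) F)
     <= (1 + C) * Rpower (INR d) q
        + Rpower C (2 * tau / p) * z
          * rpow (Rpower (INR d) (2 * q / p) / lam_dk lam kmax) tau).
Proof.
  split.
  - exact (part1 P I lam C p q Hnonneg Hdecr Htract).
  - exact (part2 P I lam C p q Hnonneg Hinit Htract).
Qed.
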